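(* There exists $c>0$ such that for every positive integer $t$ there is $\alpha=\alpha(t)>0$ with the following property: every quasi-comparability graph of complexity $t$ on $n$ vertices contains a clique or an independent set of size at least $\alpha n^{c}$.
   Context: For $\mathbf{x},\mathbf{y}\in\mathbb{R}^t$ write $\mathbf{x}\prec\mathbf{y}$ if $\mathbf{x}(i)<\mathbf{y}(i)$ for every $i\in[t]$. A quasi-comparability graph of complexity $t$ is a finite simple graph $G$ with $V(G)\subset\mathbb{R}^t\times\mathbb{R}^t$ in which distinct vertices $(\mathbf{x},\mathbf{y})$ and $(\mathbf{x}',\mathbf{y}')$ are adjacent iff $\mathbf{x}\prec\mathbf{y}'$ or $\mathbf{x}'\prec\mathbf{y}$. *)

(* Defs.v *)
From HB Require Import structures.
From mathcomp Require Import all_boot all_order all_algebra.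
From mathcomp Require Import all_classical all_reals all_analysis.
From mathcomp Require Import Rstruct Rstruct_topology.
Set Implicit Arguments. Unset Strict Implicit. Unset Printing Implicit Defensive.
Import Order.TTheory GRing.Theory Num.Theory.
Local Open Scope ring_scope.

Notation RR := Rdefinitions.R.

Definition vprec (t : nat) (x y : 'rV[RR]_t) : bool :=
  [forall i : 'I_t, x ord0 i < y ord0 i].

Definition qvert (t : nat) := ('rV[RR]_t * 'rV[RR]_t)%type.

Definition qc_adj (t : nat) (u v : qvert t) : bool :=
  (u != v) && (vprec u.1 v.2 || vprec v.1 u.2).

(* the graph is given by its (finite) vertex set V, a duplicate-free list;
   S is a clique / independent set: a duplicate-free list of vertices of V,
   pairwise adjacent / pairwise non-adjacent *)
Definition is_clique (t : nat) (V S : seq (qvert t)) : Prop :=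
  [/\ uniq S, {subset S <= V} &
      forall u v, u \in S -> v \in S -> u != v -> qc_adj u v].

Definition is_indep (t : nat) (V S : seq (qvert t)) : Prop :=
  [/\ uniq S, {subset S <= V} &
      forall u v, u \in S -> v \in S -> u != v -> ~~ qc_adj u v].

(* Main.v *)
Require Import Defs.
From HB Require Import structures.
From mathcomp Require Import all_boot all_order all_algebra.
From mathcomp Require Import all_classical all_reals all_analysis.
From mathcomp Require Import Rstruct Rstruct_topology.
From mathcomp Require Import zify.
Set Implicit Arguments. Unset Strict Implicit. Unset Printing Implicit Defensive.
Import Order.TTheory GRing.Theory Num.Theory.


(* Proof idea: for each coordinate, sort endpoints into ranks and use a dyadic
   level decomposition; inside one level class the relation x(i) < y'(i) is
   transitive, so the graph is a comparability graph; Mirsky's theorem gives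
   |clique| * |independent set| >= n / (log n)^t. *)

Section Mirsky.
Variable T : eqType.
Variable P : rel T.

Lemma count_le_sub (p q : pred T) (X : seq T) :
  {in X, forall z, p z -> q z} -> count p X <= count q X.
Proof.
elim: X => [//|x X IH] H /=.
have H' : {in X, forall z, p z -> q z} by move=> z Hz; apply: H; rewrite inE Hz orbT.
have := IH H'; case Hpx: (p x); first by rewrite (H x (mem_head _ _) Hpx) /=; lia.
by case: (q x) => /=; lia.
Qed.

Lemma count_lt_sub (p q : pred T) (X : seq T) y :
  {in X, forall z, p z -> q z} -> y \in X -> q y -> ~~ p y ->
  count p X < count q X.
Proof.
elim: X => [//|x X IH] Hpq; rewrite inE => /orP [/eqP -> | Hy] Hq Hp /=.
  rewrite (negbTE Hp) Hq /= add0n add1n ltnS.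
  apply: count_le_sub => z Hz; apply: Hpq; by rewrite inE Hz orbT.
have H' : {in X, forall z, p z -> q z} by move=> z Hz; apply: Hpq; rewrite inE Hz orbT.
have := IH H' Hy Hq Hp.
case Hpx: (p x); first by rewrite (Hpq x (mem_head _ _) Hpx).
by case: (q x) => /= ?; lia.
Qed.

Variable X : seq T.
Hypothesis Ptr : {in X & X & X, forall x y z, P x y -> P y z -> P x z}.
Hypothesis Pirr : {in X, forall x, ~~ P x x}.

Definition minX (Y : seq T) (x : T) := ~~ has (fun y => P y x) Y.

Lemma exists_min (Y : seq T) : {subset Y <= X} -> forall x, x \in Y ->
  exists2 m, m \in Y & minX Y m /\ (m = x \/ P m x).
Proof.
move=> sYX.
suff H : forall k x, x \in Y -> count (fun y => P y x) Y <= k ->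
  exists2 m, m \in Y & minX Y m /\ (m = x \/ P m x).
  by move=> x Hx; apply: (H _ x Hx (leqnn _)).
elim=> [|k IH] x Hx Hc.
  exists x => //; split; last by left.
  by rewrite /minX has_count; lia.
case Hm: (minX Y x); first by exists x => //; split=> //; left.
move/negbFE: Hm => /hasP [y Hy Pyx].
have Hlt : count (fun z => P z y) Y < count (fun z => P z x) Y.
  apply: (@count_lt_sub _ _ _ y) => //.
  - by move=> z Hz Pzy; apply: (Ptr (sYX _ Hz) (sYX _ Hy) (sYX _ Hx) Pzy Pyx).
  - by apply: Pirr; apply: sYX.
have [m Hm [Hmin Hor]] := IH y Hy (leq_trans (ltnSE (leq_trans Hlt Hc)) (leqnn _)).
exists m => //; split => //; right.
case: Hor => [->//|Pmy]; exact: (Ptr (sYX _ Hm) (sYX _ Hy) (sYX _ Hx) Pmy Pyx).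
Qed.

Definition chainP (C : seq T) := {in C &, forall x y, x != y -> P x y || P y x}.
Definition antiP (A : seq T) := {in A &, forall x y, ~~ P x y}.

Lemma mirsky_gen n : forall Y : seq T, size Y <= n -> uniq Y -> {subset Y <= X} ->
  exists C A, (uniq C /\ uniq A /\ {subset C <= Y} /\ {subset A <= Y}) /\
    [/\ chainP C, antiP A & size Y <= size C * size A].
Proof.
elim: n => [|n IH] Y HY uY sYX.
  exists [::], [::]; split; first by do !split.
  by split=> //; lia.
set M := [seq x <- Y | minX Y x].
set Y' := [seq x <- Y | ~~ minX Y x].
have HsY : size Y = size M + size Y'.
  by rewrite !size_filter count_predC.
have antiM : antiP M.
  move=> x y; rewrite !mem_filter => /andP [_ Hx] /andP [Hy _].
  by apply/negP => Pxy; move/hasP: Hy; apply; exists x.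
have sY'Y : {subset Y' <= Y} by move=> z; rewrite mem_filter => /andP [].
have sMY : {subset M <= Y} by move=> z; rewrite mem_filter => /andP [].
case: (altP (Y' =P [::])) => [eqY'|neY'].
- case: (altP (Y =P [::])) => [EY|nY].
    exists [::], [::]; split; first by do !split.
    by split=> //; rewrite EY.
  have [x Hx] : exists x, x \in Y.
    by case: (Y) nY => [|z ?] //= _; exists z; exact: mem_head.
  exists [:: x], M; split.
    split; first by [].
    split; first by rewrite filter_uniq.
    split; last by [].
    by move=> z; rewrite inE => /eqP ->.
  split=> //.
    by move=> a b; rewrite !inE => /eqP -> /eqP ->; rewrite eqxx.
  by rewrite HsY eqY' /=; lia.
- have [y0 Hy0] : exists y0, y0 \in Y'.
    by case: (Y') neY' => [|z ?] //= _; exists z; exact: mem_head.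
  have [m0 Hm0 [Hmin0 _]] := exists_min (sYX) (sY'Y _ Hy0).
  have HM0 : m0 \in M by rewrite mem_filter Hmin0.
  have HsM : 0 < size M by case: (M) HM0.
  have HY'n : size Y' <= n by lia.
  have sY'X : {subset Y' <= X} by move=> z /sY'Y /sYX.
  have [C' [A' [[uC' [uA' [sC' sA']]] [chC' anA' Hsz]]]] :=
    IH Y' HY'n (filter_uniq _ uY) sY'X.
  have [c Hc _] : exists2 c, c \in C' & True.
    case: (C') Hsz => [|z ?] /=; last by exists z => //; exact: mem_head.
    by case: (Y') neY' Hy0 => [|??] //=; lia.
  have sC'X : {subset C' <= X} by move=> z /sC' /sY'X.
  have [c1 Hc1 [Hminc1 _]] := exists_min sC'X Hc.
  have : c1 \in Y' by apply: sC'.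
  rewrite mem_filter negbK => /andP [/hasP [y Hy Pyc1] _].
  have [m Hm [Hminm Hor]] := exists_min sYX Hy.
  have Pmc1 : P m c1.
    case: Hor => [->//|Pmy]; exact: (Ptr (sYX _ Hm) (sYX _ Hy) (sYX _ (sY'Y _ (sC' _ Hc1))) Pmy Pyc1).
  have HmM : m \in M by rewrite mem_filter Hminm.
  have HmC' : m \notin C'.
    by apply/negP => /sC'; rewrite mem_filter Hminm.
  have Pmall : forall z, z \in C' -> P m z.
    move=> z Hz; case: (altP (z =P c1)) => [->//|nz].
    have := chC' _ _ Hz Hc1 nz; case/orP => [Pzc1|Pc1z].
      by move/hasP: Hminc1 => []; exists z.
    have HzX := sC'X _ Hz; have Hc1X := sC'X _ Hc1.
    exact: (Ptr (sYX _ Hm) Hc1X HzX Pmc1 Pc1z).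
  exists (m :: C'), (if size A' <= size M then M else A'); split.
    split; first by rewrite /= HmC' uC'.
    split; first by case: ifP => _ //; rewrite filter_uniq.
    split.
      move=> z; rewrite inE => /orP [/eqP -> //|/sC' /sY'Y //].
    by case: ifP => _ // z /sA' /sY'Y.
  split.
  + move=> x z; rewrite !inE => /orP [/eqP ->|Hx] /orP [/eqP ->|Hz].
    * by rewrite eqxx.
    * by move=> _; rewrite Pmall.
    * by move=> _; rewrite Pmall ?orbT.
    * exact: chC'.
  + by case: ifP.
  + rewrite HsY /= mulSn; case: ifP => Hle.
      rewrite leq_add2l; apply: (leq_trans Hsz); exact: leq_mul.
    move/negbT: Hle; rewrite -ltnNge => Hle; apply: leq_add; first exact: ltnW.
    exact: Hsz.
Qed.
End Mirsky.
Definition lev (L A B : nat) := find (fun l => A %/ 2^l == B %/ 2^l) (iota 0 L.+1).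

Lemma lev_spec L A B : A < 2^L -> B < 2^L ->
  [/\ lev L A B <= L, A %/ 2^(lev L A B) = B %/ 2^(lev L A B) &
      forall l, l < lev L A B -> A %/ 2^l != B %/ 2^l].
Proof.
move=> HA HB.
have Hhas : has (fun l => A %/ 2^l == B %/ 2^l) (iota 0 L.+1).
  apply/hasP; exists L; first by rewrite mem_iota /=; lia.
  by rewrite !divn_small.
have Hlt : lev L A B < L.+1.
  by move: Hhas; rewrite has_find size_iota.
split; first by [].
- have := nth_find 0 Hhas; rewrite -/(lev L A B) nth_iota //.
  by move/eqP.
- move=> l Hl; have := before_find 0 Hl; rewrite nth_iota; last by lia.
  by move=> ->.
Qed.

Lemma lev_pos L A B : A < 2^L -> B < 2^L -> A != B -> 0 < lev L A B.
Proof.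
move=> HA HB HAB; have [_ H _] := lev_spec HA HB.
case E: (lev L A B) H => [|l] //; rewrite expn0 !divn1 => H.
by rewrite H eqxx in HAB.
Qed.

Lemma dy_key l A1 B1 A2 B2 : 0 < l -> A1 < B1 -> A2 < B2 ->
  A1 %/ 2^l = B1 %/ 2^l -> A2 %/ 2^l = B2 %/ 2^l ->
  A1 %/ 2^l.-1 != B1 %/ 2^l.-1 -> A2 %/ 2^l.-1 != B2 %/ 2^l.-1 ->
  (A1 < B2) = (A1 %/ 2^l <= A2 %/ 2^l).
Proof.
case: l => [//|l] _ H1 H2; rewrite /= expnS mulnC !divnMA.
set d := 2^l.
set a1 := A1 %/ d; set b1 := B1 %/ d; set a2 := A2 %/ d; set b2 := B2 %/ d.
move=> E1 E2 N1 N2.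
have L1 : a1 <= b1 by apply: leq_div2r; exact: ltnW.
have L2 : a2 <= b2 by apply: leq_div2r; exact: ltnW.
have Da1 := divn_eq a1 2; have Db1 := divn_eq b1 2.
have Da2 := divn_eq a2 2; have Db2 := divn_eq b2 2.
have Ma1 : a1 %% 2 < 2 by apply: ltn_pmod.
have Mb1 : b1 %% 2 < 2 by apply: ltn_pmod.
have Ma2 : a2 %% 2 < 2 by apply: ltn_pmod.
have Mb2 : b2 %% 2 < 2 by apply: ltn_pmod.
move/eqP: N1 => N1; move/eqP: N2 => N2.
apply/idP/idP => H.
- have : a1 <= b2 by apply: leq_div2r; exact: ltnW.
  move: E1 E2 N1 N2 L1 L2 Da1 Db1 Da2 Db2 Ma1 Mb1 Ma2 Mb2.
  generalize (a1 %/ 2) (b1 %/ 2) (a2 %/ 2) (b2 %/ 2) (a1 %% 2) (b1 %% 2) (a2 %% 2) (b2 %% 2).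
  move=> *; lia.
- rewrite ltnNge; apply/negP => H'.
  have : b2 <= a1 by apply: leq_div2r.
  move: H E1 E2 N1 N2 L1 L2 Da1 Db1 Da2 Db2 Ma1 Mb1 Ma2 Mb2.
  generalize (a1 %/ 2) (b1 %/ 2) (a2 %/ 2) (b2 %/ 2) (a1 %% 2) (b1 %% 2) (a2 %% 2) (b2 %% 2).
  move=> *; lia.
Qed.

Local Open Scope ring_scope.

Definition rk (s : seq RR) (x : RR) : nat := count (fun y => y < x) s.

Lemma rk_le (s : seq RR) x y : x <= y -> (rk s x <= rk s y)%N.
Proof.
move=> Hxy; rewrite /rk; elim: s => [//|w s IH] /=; apply: leq_add => //.
by case Hw: (w < x) => //; rewrite (lt_le_trans Hw Hxy).
Qed.

Lemma rk_lt (s : seq RR) x y : x \in s -> (x < y) = (rk s x < rk s y)%N.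
Proof.
move=> Hx; apply/idP/idP => H.
- rewrite /rk.
  elim: s Hx => [//|z s IH]; rewrite inE => /orP [/eqP <-|Hx] /=.
    rewrite ltxx H /= add0n add1n ltnS.
    exact: (rk_le s (ltW H)).
  have := IH Hx.
  case Hzx: (z < x); first by rewrite (lt_trans Hzx H) /=; lia.
  by case: (z < y) => /=; lia.
- rewrite ltNge; apply/negP => Hyx; move: H; rewrite ltnNge => /negP; apply.
  exact: rk_le.
Qed.

Lemma rk_bound (s : seq RR) x : x \in s -> (rk s x < size s)%N.
Proof.
rewrite /rk; elim: s => [//|z s IH]; rewrite inE => /orP [/eqP ->|Hx] /=.
  by rewrite ltxx add0n ltnS count_size.
have := IH Hx; case: (z < x) => /=; lia.
Qed.

Local Close Scope ring_scope.
Lemma pigeon (T : eqType) m : forall (X : seq T) (f : T -> nat),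
  (forall x, x \in X -> f x < m) ->
  exists j, size X <= m * count (fun x => f x == j) X.
Proof.
elim: m => [|m IH] X f Hf.
  exists 0; case: X Hf => [//|x X] Hf.
  by have := Hf x (mem_head _ _).
set c := count (fun x => f x == m) X.
case: (leqP (size X) (m.+1 * c)) => Hc; first by exists m.
set X' := [seq x <- X | f x != m].
have HX : size X = c + size X'.
  by rewrite size_filter -(count_predC (fun x => f x == m)).
have Hf' : forall x, x \in X' -> f x < m.
  move=> x; rewrite mem_filter => /andP [Hne Hx].
  by have := Hf x Hx; rewrite ltnS leq_eqVlt (negbTE Hne).
have [j Hj] := IH X' f Hf'.
exists j.
have Hcj : count (fun x => f x == j) X' <= count (fun x => f x == j) X.
  by rewrite count_filter; apply: sub_count => x /andP [].
set cj := count (fun x => f x == j) X' in Hj Hcj.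
set cJ := count (fun x => f x == j) X in Hcj *.
case: (posnP m) => [m0|mpos].
  by move: Hj Hc; rewrite HX m0 mul0n leqn0 => /eqP ->; lia.
have H2 : (m.+1) * size X' <= (m.+1) * (m * cJ).
  by apply: leq_mul => //; apply: leq_trans Hj _; apply: leq_mul.
have H3 : m * size X < m * (m.+1 * cJ).
  have E : (m.+1) * size X' = (m.+1) * size X - (m.+1) * c by rewrite HX; lia.
  rewrite E in H2.
  rewrite mulnA [m * m.+1]mulnC -mulnA; apply: (leq_trans _ H2).
  rewrite mulSn; lia.
by rewrite ltn_pmul2l // in H3; apply: ltnW.
Qed.

Lemma bin_le_exp n k : 'C(n, k) <= 2 ^ n.
Proof.
elim: n k => [|n IH] [|k] //=.
- by rewrite bin0 expn_gt0.
- by rewrite binS expnS mul2n -addnn; apply: leq_add.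
Qed.

Lemma pow_le_ffact L r : (L.+1) ^ r <= (L + r) ^_ r.
Proof.
elim: r => [|r IH]; first by rewrite expn0 ffactn0.
rewrite addnS ffactSS expnS; apply: leq_mul; first by lia.
exact: IH.
Qed.

Lemma pow_le_exp L r : (L.+1) ^ r <= r`! * 2 ^ (L + r).
Proof.
apply: (leq_trans (pow_le_ffact L r)); rewrite -bin_ffact mulnC.
by apply: leq_mul => //; apply: bin_le_exp.
Qed.

Lemma log_bound n r : 0 < n -> (trunc_log 2 n).+3 ^ r <= r`! * 2 ^ (r + 2) * n.
Proof.
move=> Hn.
have H1 := pow_le_exp (trunc_log 2 n).+2 r.
have H2 := trunc_logP (isT : 1 < 2) Hn.
apply: (leq_trans H1); rewrite -mulnA; apply: leq_mul => //.
have -> : ((trunc_log 2 n).+2 + r = (r + 2) + trunc_log 2 n)%N by lia.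
by rewrite expnD; apply: leq_mul.
Qed.

Local Open Scope ring_scope.

Definition avals t (V : seq (qvert t)) (i : 'I_t) : seq RR :=
  [seq u.1 ord0 i | u : qvert t <- V] ++ [seq u.2 ord0 i | u : qvert t <- V].
Definition Lv (n : nat) := (trunc_log 2 n).+2.
Definition cls t (V : seq (qvert t)) (i : 'I_t) (u : qvert t) : nat :=
  if u.1 ord0 i < u.2 ord0 i then
    lev (Lv (size V)) (rk (avals V i) (u.1 ord0 i)) (rk (avals V i) (u.2 ord0 i))
  else 0%N.

Lemma mem_av1 t (V : seq (qvert t)) i u : u \in V -> u.1 ord0 i \in avals V i.
Proof. by move=> Hu; rewrite mem_cat; apply/orP; left; apply/mapP; exists u. Qed.
Lemma mem_av2 t (V : seq (qvert t)) i u : u \in V -> u.2 ord0 i \in avals V i.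
Proof. by move=> Hu; rewrite mem_cat; apply/orP; right; apply/mapP; exists u. Qed.

Lemma rk_small t (V : seq (qvert t)) i x : x \in avals V i ->
  (rk (avals V i) x < 2 ^ Lv (size V))%N.
Proof.
move=> Hx; have := rk_bound Hx; rewrite size_cat !size_map /Lv.
have := trunc_log_ltn (size V) (isT : (1 < 2)%N); rewrite !expnS; lia.
Qed.

Lemma cls_lt t (V : seq (qvert t)) i u : u \in V -> (cls V i u < (Lv (size V)).+1)%N.
Proof.
move=> Hu; rewrite /cls; case: ifP => // _.
have [H _ _] := lev_spec (rk_small (mem_av1 i Hu)) (rk_small (mem_av2 i Hu)).
by rewrite ltnS.
Qed.

Lemma clsJ t (V : seq (qvert t)) i u : u \in V -> (0 < cls V i u)%N = (u.1 ord0 i < u.2 ord0 i).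
Proof.
move=> Hu; rewrite /cls; case: ifP => // Hab.
apply: lev_pos; try exact: rk_small (mem_av1 i Hu); try exact: rk_small (mem_av2 i Hu).
by rewrite neq_ltn -rk_lt ?Hab //; exact: mem_av1.
Qed.

Lemma cls_trans t (V : seq (qvert t)) i u v w : u \in V -> v \in V -> w \in V ->
  cls V i u = cls V i v -> cls V i v = cls V i w ->
  u.1 ord0 i < v.2 ord0 i -> v.1 ord0 i < w.2 ord0 i -> u.1 ord0 i < w.2 ord0 i.
Proof.
move=> Hu Hv Hw Euv Evw Huv Hvw.
case Ju: (u.1 ord0 i < u.2 ord0 i).
- have Jv : v.1 ord0 i < v.2 ord0 i by rewrite -(clsJ i Hv) -Euv clsJ.
  have Jw : w.1 ord0 i < w.2 ord0 i by rewrite -(clsJ i Hw) -Evw -Euv clsJ.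
  have lpos : (0 < cls V i u)%N by rewrite clsJ.
  move: Euv Evw lpos; rewrite /cls Ju Jv Jw.
  set s := avals V i; set L := Lv (size V).
  set Au := rk s (u.1 ord0 i); set Bu := rk s (u.2 ord0 i).
  set Av := rk s (v.1 ord0 i); set Bv := rk s (v.2 ord0 i).
  set Aw := rk s (w.1 ord0 i); set Bw := rk s (w.2 ord0 i).
  have [_ Eu Nu] := lev_spec (rk_small (mem_av1 i Hu)) (rk_small (mem_av2 i Hu)).
  have [_ Ev Nv] := lev_spec (rk_small (mem_av1 i Hv)) (rk_small (mem_av2 i Hv)).
  have [_ Ew Nw] := lev_spec (rk_small (mem_av1 i Hw)) (rk_small (mem_av2 i Hw)).
  rewrite -/s -/L -/Au -/Bu -/Av -/Bv -/Aw -/Bw in Eu Nu Ev Nv Ew Nw.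
  move=> Euv Evw lpos.
  rewrite -Euv in Ev Nv; rewrite -Evw -Euv in Ew Nw.
  set l := lev L Au Bu in Eu Nu Ev Nv Ew Nw lpos.
  have ABu : (Au < Bu)%N by rewrite -rk_lt //; exact: mem_av1.
  have ABv : (Av < Bv)%N by rewrite -rk_lt //; exact: mem_av1.
  have ABw : (Aw < Bw)%N by rewrite -rk_lt //; exact: mem_av1.
  have ll : (l.-1 < l)%N by lia.
  have K1 := dy_key lpos ABu ABv Eu Ev (Nu _ ll) (Nv _ ll).
  have K2 := dy_key lpos ABv ABw Ev Ew (Nv _ ll) (Nw _ ll).
  have K3 := dy_key lpos ABu ABw Eu Ew (Nu _ ll) (Nw _ ll).
  rewrite (rk_lt _ (mem_av1 i Hu)) -/s -/Au -/Bw K3.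
  rewrite (rk_lt _ (mem_av1 i Hu)) -/s -/Au -/Bv K1 in Huv.
  rewrite (rk_lt _ (mem_av1 i Hv)) -/s -/Av -/Bw K2 in Hvw.
  exact: leq_trans Huv Hvw.
- have Jv : ~~ (v.1 ord0 i < v.2 ord0 i).
    by rewrite -(clsJ i Hv) -Euv clsJ // Ju.
  rewrite -leNgt in Jv.
  exact: lt_trans (le_lt_trans Jv Hvw).
Qed.

Lemma classes t (V : seq (qvert t)) (I : seq 'I_t) : uniq V ->
  exists Y : seq (qvert t), [/\ uniq Y, {subset Y <= V},
    (size V <= (Lv (size V)).+1 ^ size I * size Y)%N &
    forall i u v, i \in I -> u \in Y -> v \in Y -> cls V i u = cls V i v].
Proof.
move=> uV; elim: I => [|i I [Y [uY sY HY HC]]].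
  by exists V; split => //; rewrite expn0 mul1n.
have [j Hj] := @pigeon _ (Lv (size V)).+1 Y (cls V i)
  (fun x Hx => cls_lt i (sY x Hx)).
exists [seq x <- Y | cls V i x == j]; split.
- exact: filter_uniq.
- by move=> x; rewrite mem_filter => /andP [_ /sY].
- rewrite size_filter /= expnS -mulnA mulnCA; apply: (leq_trans HY).
  by rewrite leq_mul2l Hj orbT.
- move=> k u v; rewrite inE !mem_filter => /orP [/eqP ->|Hk] /andP [Hu Hu'] /andP [Hv Hv'].
    by rewrite (eqP Hu) (eqP Hv).
  exact: HC.
Qed.

Definition Dr t (u v : qvert t) : bool := vprec u.1 v.2.

Lemma Dr_trans t (V Y : seq (qvert t)) : {subset Y <= V} ->
  (forall i u v, i \in enum 'I_t -> u \in Y -> v \in Y -> cls V i u = cls V i v) ->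
  {in Y & Y & Y, forall u v w, Dr u v -> Dr v w -> Dr u w}.
Proof.
move=> sY HC u v w Hu Hv Hw /forallP H1 /forallP H2; apply/forallP => i.
apply: (cls_trans (sY _ Hu) (sY _ Hv) (sY _ Hw)) => //.
- by apply: HC; rewrite ?mem_enum.
- by apply: HC; rewrite ?mem_enum.
Qed.

Lemma idx_inj (T : eqType) (V : seq T) u v : u \in V -> v \in V ->
  index u V = index v V -> u = v.
Proof. by move=> Hu Hv E; rewrite -(nth_index u Hu) -(nth_index u Hv) E. Qed.

Lemma nat_core n a m K : (0 < n)%N -> (n <= a * (m * m))%N -> (a * a <= K * n)%N ->
  (n <= K * (m * m * (m * m)))%N.
Proof.
move=> Hn H1 H2.
have H3 : (n * n <= (a * (m * m)) * (a * (m * m)))%N by apply: leq_mul.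
have H4 : ((a * (m * m)) * (a * (m * m)) <= (K * n) * ((m * m) * (m * m)))%N.
  by rewrite mulnACA; apply: leq_mul.
have H5 := leq_trans H3 H4.
rewrite -(@leq_pmul2l n) //; apply: (leq_trans H5).
by rewrite -mulnA mulnCA.
Qed.

Theorem theorem4p1 :
  exists c : RR, 0 < c /\
  forall t : nat, (0 < t)%N ->
  exists alpha : RR, 0 < alpha /\
  forall V : seq (qvert t), uniq V ->
  exists S : seq (qvert t),
    (is_clique V S \/ is_indep V S) /\
    alpha * ((size V)%:R `^ c) <= (size S)%:R.
Proof.
exists (4^-1); split; first by rewrite invr_gt0.
move=> t _.
set K := ((2 * t)`! * 2 ^ (2 * t + 2))%N.
have Kpos : (0 < K)%N by rewrite muln_gt0 fact_gt0 expn_gt0.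
exists (K%:R^-1); split; first by rewrite invr_gt0 ltr0n.
move=> V uV.
case: (posnP (size V)) => [n0|npos].
  exists [::]; split; first by left; split.
  by rewrite n0 powR0 ?mulr0 // invr_eq0.
have [Y [uY sY HY HC]] := classes (enum 'I_t) uV.
rewrite size_enum_ord in HY.
have Dtr := Dr_trans sY HC.
pose P := fun u v : qvert t => Dr u v && (Dr v u ==> (index u V < index v V)%N).
have Ptr : {in Y & Y & Y, forall x y z, P x y -> P y z -> P x z}.
  move=> x y z Hx Hy Hz /andP [Dxy Ixy] /andP [Dyz Iyz]; apply/andP; split.
    exact: Dtr Dxy Dyz.
  apply/implyP => Dzx.
  have Dyx : Dr y x := Dtr y z x Hy Hz Hx Dyz Dzx.
  have Dzy : Dr z y := Dtr z x y Hz Hx Hy Dzx Dxy.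
  have := implyP Ixy Dyx; have := implyP Iyz Dzy; lia.
have Pirr : {in Y, forall x, ~~ P x x}.
  by move=> x _; rewrite /P ltnn implybF; case: (Dr x x).
have [C [A [[uC [uA [sC sA]]] [chC anA HCA]]]] :=
  @mirsky_gen _ P Y Ptr Pirr (size Y) Y (leqnn _) uY (fun x H => H).
have sCV : {subset C <= V} by move=> x /sC /sY.
have sAV : {subset A <= V} by move=> x /sA /sY.
have HCl : is_clique V C.
  split => // u v Hu Hv Huv; rewrite /qc_adj Huv /=.
  by have := chC u v Hu Hv Huv; case/orP => /andP [H _]; apply/orP; [left|right]; exact: H.
have HIn : is_indep V A.
  split => // u v Hu Hv Huv; rewrite /qc_adj Huv /=.
  have Nuv := anA u v Hu Hv; have Nvu := anA v u Hv Hu.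
  apply/negP => /orP [Duv|Dvu].
  - move: Nuv Nvu; rewrite /P; change (vprec u.1 v.2) with (Dr u v) in Duv.
    rewrite Duv /=; case Dvu: (Dr v u) => //=; rewrite -!leqNgt => H1 H2.
    by move/eqP: Huv; apply; apply: idx_inj (sAV _ Hu) (sAV _ Hv) _; lia.
  - move: Nuv Nvu; rewrite /P; change (vprec v.1 u.2) with (Dr v u) in Dvu.
    rewrite Dvu /=; case Duv: (Dr u v) => //=; rewrite -!leqNgt => H1 H2.
    by move/eqP: Huv; apply; apply: idx_inj (sAV _ Hu) (sAV _ Hv) _; lia.
set m := if (size A <= size C)%N then size C else size A.
exists (if (size A <= size C)%N then C else A); split.
  by case: ifP => _; [left|right].
rewrite -/m.
have HmC : (size C <= m)%N by rewrite /m; case: ifP => //; lia.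
have HmA : (size A <= m)%N by rewrite /m; case: ifP => //; lia.
set n := size V in npos HY *.
set s := (Lv n).+1 in HY.
have H1 : (n <= s ^ t * (m * m))%N.
  apply: (leq_trans HY); rewrite leq_mul2l; apply/orP; right.
  by apply: (leq_trans HCA); apply: leq_mul.
have H2 : (s ^ t * s ^ t <= K * n)%N.
  rewrite -expnD addnn -mul2n /K; exact: log_bound.
have H3 := nat_core npos H1 H2.
have H4 : (n <= (K * m) ^ 4)%N.
  apply: (leq_trans H3); rewrite expnMn; apply: leq_mul.
    by rewrite -{1}(expn1 K); apply: leq_pexp2l.
  by rewrite !expnS expn0 muln1 !mulnA.
have H5 : (n%:R : RR) <= (K%:R * m%:R) ^+ 4.
  by rewrite -natrM -natrX ler_nat.
have H6 : (n%:R : RR) `^ 4^-1 <= K%:R * m%:R.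
  have q0 : (0 : RR) <= 4^-1 by rewrite invr_ge0.
  have := @ge0_ler_powR _ (4^-1) q0 _ _ _ _ H5.
  rewrite -powR_mulrn ?mulr_ge0 // -powRrM mulfV // powRr1 ?mulr_ge0 //.
  by apply; rewrite nnegrE ?ler0n // exprn_ge0 // mulr_ge0.
rewrite -[X in _ <= X](@mulKf _ K%:R) ?pnatr_eq0 -?lt0n //.
rewrite ler_wpM2l ?invr_ge0 ?ler0n //.
by move: H6; rewrite /m; case: ifP.
Qed.
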